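(* Let $S_8=\mathrm{diag}(1,-1,1,-1,1,-1,1,-1)$. For every $a\in C\ell_{1,2}$, $$L(a')=L(a)^T,\quad R(a')=R(a)^T,\quad L(\bar a)=S_8L(a)^TS_8,\quad R(\bar a)=S_8R(a)^TS_8.$$
   Context: $C\ell_{1,2}$ is the real Clifford algebra generated by $i_1,i_2,i_3$ with $i_1^2=1$, $i_2^2=i_3^2=-1$ and $i_ti_m=-i_mi_t$ for $t\neq m$, with real basis $e_0=1$, $e_1=i_1$, $e_2=i_2$, $e_3=i_1i_2$, $e_4=i_3$, $e_5=i_1i_3$, $e_6=i_2i_3$, $e_7=i_1i_2i_3$. For $x=\sum_{t=0}^7x_te_t$ write $\overrightarrow{x}=(x_0,\dots,x_7)^T\in\mathbb{R}^8$. For $a\in C\ell_{1,2}$, $L(a)$ and $R(a)$ are the real $8\times8$ matrices with $\overrightarrow{ax}=L(a)\overrightarrow{x}$ and $\overrightarrow{xa}=R(a)\overrightarrow{x}$ for all $x\in C\ell_{1,2}$. For $a=\sum a_te_t$: $\bar a=a_0-a_1e_1-a_2e_2-a_3e_3-a_4e_4-a_5e_5-a_6e_6+a_7e_7$ and $a'=a_0+a_1e_1-a_2e_2+a_3e_3-a_4e_4+a_5e_5-a_6e_6-a_7e_7$. *)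

(* Defs.v *)
From mathcomp Require Import all_boot all_order all_algebra.
From mathcomp Require Import reals.
Set Implicit Arguments. Unset Strict Implicit. Unset Printing Implicit Defensive.
Import Order.TTheory GRing.Theory Num.Theory.
Local Open Scope ring_scope.

(* Basis e_t of Cl_{1,2}, t = 0..7, is indexed by the bitmask of generators:
   bit 0 <-> i1, bit 1 <-> i2, bit 2 <-> i3 (e_3 = i1 i2, e_5 = i1 i3, ...). *)
Definition bitn (n b : nat) : bool := odd (n %/ 2 ^ b).

(* index of e_s e_t (up to sign): symmetric difference of bitmasks *)
Definition clxor (s t : nat) : nat :=
  (\sum_(b < 3) (bitn s b (+) bitn t b) * 2 ^ b)%N.

(* number of transpositions needed to reorder (gens of s)(gens of t) *)
Definition clswaps (s t : nat) : nat :=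
  (\sum_(b < 3) \sum_(c < 3) [&& bitn t b, bitn s c & (b < c)%N])%N.

(* number of squared generators equal to -1 (i2^2 = i3^2 = -1, i1^2 = 1) *)
Definition clnegsq (s t : nat) : nat :=
  ((bitn s 1 && bitn t 1) + (bitn s 2 && bitn t 2))%N.

(* e_s e_t = clsign s t * e_(clxor s t) *)
Definition clsign (R : pzRingType) (s t : nat) : R :=
  (-1) ^+ (clswaps s t + clnegsq s t).

(* Elements of Cl_{1,2} are represented by their coordinate vectors
   x = (x_0,...,x_7)^T, so the vectorization map x |-> ->x is the identity. *)
Definition clmul (R : pzRingType) (x y : 'cV[R]_8) : 'cV[R]_8 :=
  \col_(k < 8) \sum_(s < 8) \sum_(t < 8)
     (if clxor s t == k then clsign R s t * x s 0 * y t 0 else 0).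

Definition clbasis (R : pzRingType) (j : 'I_8) : 'cV[R]_8 := delta_mx j 0.

(* L(a), R(a): the matrices of x |-> a x and x |-> x a; column j is the
   coordinate vector of a e_j (resp. e_j a). *)
Definition Lmat (R : pzRingType) (a : 'cV[R]_8) : 'M[R]_8 :=
  \matrix_(i < 8, j < 8) clmul a (clbasis R j) i 0.
Definition Rmat (R : pzRingType) (a : 'cV[R]_8) : 'M[R]_8 :=
  \matrix_(i < 8, j < 8) clmul (clbasis R j) a i 0.

Definition clbar (R : pzRingType) (a : 'cV[R]_8) : 'cV[R]_8 :=
  \col_(i < 8) ((if (i == 0 :> nat) || (i == 7 :> nat) then 1 else -1) * a i 0).

Definition clprime (R : pzRingType) (a : 'cV[R]_8) : 'cV[R]_8 :=
  \col_(i < 8) ((if ((i : nat) \in [:: 0; 1; 3; 5]%N) then 1 else -1) * a i 0).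

Definition S8 (R : pzRingType) : 'M[R]_8 := diag_mx (\row_(i < 8) (-1) ^+ i).

(* Main.v *)
Require Import Defs.
From mathcomp Require Import all_boot all_order all_algebra.
From mathcomp Require Import reals.
Import Order.TTheory GRing.Theory Num.Theory.
Local Open Scope ring_scope.

Definition xorE s t := (0 + (bitn s 0 (+) bitn t 0) * 2 ^ 0 + (bitn s 1 (+) bitn t 1) * 2 ^ 1 +
  (bitn s 2 (+) bitn t 2) * 2 ^ 2)%N.
Lemma clxorE s t : clxor s t = xorE s t.
Proof. by rewrite /clxor !big_ord_recr big_ord0 /=. Qed.
Definition swE s t := (0 +
  (0 + [&& bitn t 0, bitn s 0 & 0 < 0] + [&& bitn t 0, bitn s 1 & 0 < 1] +
   [&& bitn t 0, bitn s 2 & 0 < 2]) +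
  (0 + [&& bitn t 1, bitn s 0 & 1 < 0] + [&& bitn t 1, bitn s 1 & 1 < 1] +
   [&& bitn t 1, bitn s 2 & 1 < 2]) +
  (0 + [&& bitn t 2, bitn s 0 & 2 < 0] + [&& bitn t 2, bitn s 1 & 2 < 1] +
   [&& bitn t 2, bitn s 2 & 2 < 2]))%N.
Lemma clswapsE s t : clswaps s t = swE s t.
Proof. by rewrite /clswaps !big_ord_recr !big_ord0 /=. Qed.

Lemma xor_lt (i j : 'I_8) : (clxor i j < 8)%N.
Proof.
rewrite clxorE; case: i => [[|[|[|[|[|[|[|[|//]]]]]]]] ?];
case: j => [[|[|[|[|[|[|[|[|//]]]]]]]] ?]; by vm_compute.
Qed.
Lemma xorC (i j : 'I_8) : clxor i j = clxor j i.
Proof.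
rewrite !clxorE; case: i => [[|[|[|[|[|[|[|[|//]]]]]]]] ?];
case: j => [[|[|[|[|[|[|[|[|//]]]]]]]] ?]; by vm_compute.
Qed.
Lemma xorK (s j i : 'I_8) : (clxor s j == i) = (s == clxor i j :> nat).
Proof.
rewrite !clxorE; case: i => [[|[|[|[|[|[|[|[|//]]]]]]]] ?];
case: j => [[|[|[|[|[|[|[|[|//]]]]]]]] ?];
case: s => [[|[|[|[|[|[|[|[|//]]]]]]]] ?]; by vm_compute.
Qed.

Definition kk (i j : 'I_8) : 'I_8 := inord (clxor i j).
Lemma kkE i j : kk i j = clxor i j :> nat.
Proof. by rewrite /kk inordK // xor_lt. Qed.
Lemma kkC i j : kk i j = kk j i.
Proof. by rewrite /kk xorC. Qed.

Lemma LmatE (R : pzRingType) (a : 'cV[R]_8) i j :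
  Lmat a i j = clsign R (kk i j) j * a (kk i j) 0.
Proof.
rewrite !mxE.
have H : forall s : 'I_8, \sum_(t < 8) (if clxor s t == i then clsign R s t * a s 0 * clbasis R j t 0 else 0) = if clxor s j == i then clsign R s j * a s 0 else 0.
  move=> s; rewrite (bigD1 j) //= big1 ?addr0 => [|t tj]; rewrite /clbasis !mxE ?eqxx ?(negbTE tj) /= ?mulr1 //; by case: ifP; rewrite ?mulr0.
rewrite (eq_bigr _ (fun s _ => H s)) (bigD1 (kk i j)) //= big1 ?addr0.
  by rewrite (xorK (kk i j) j i) kkE eqxx.
move=> s sk; rewrite (xorK s j i); case: eqP => // e; case/eqP: sk; apply: val_inj; by rewrite /= kkE.
Qed.

Lemma RmatE (R : pzRingType) (a : 'cV[R]_8) i j :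
  Rmat a i j = clsign R j (kk i j) * a (kk i j) 0.
Proof.
rewrite !mxE (bigD1 j) //= [X in _ + X]big1 ?addr0.
  rewrite (bigD1 (kk i j)) //= big1 ?addr0.
    by rewrite xorC (xorK (kk i j) j i) kkE eqxx /clbasis !mxE !eqxx mulr1.
  move=> t tk; rewrite xorC (xorK t j i). case: eqP => // e; case/eqP: tk; apply: val_inj; by rewrite /= kkE.
move=> s sj; apply: big1 => t _; rewrite /clbasis !mxE (negbTE sj) /=; by case: ifP; rewrite ?mulr0 ?mul0r.
Qed.

Lemma LmatM (R : pzRingType) (a : 'cV[R]_8) :
  Lmat a = \matrix_(i, j) (clsign R (kk i j) j * a (kk i j) 0).
Proof. by apply/matrixP=> i j; rewrite LmatE mxE. Qed.
Lemma RmatM (R : pzRingType) (a : 'cV[R]_8) :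
  Rmat a = \matrix_(i, j) (clsign R j (kk i j) * a (kk i j) 0).
Proof. by apply/matrixP=> i j; rewrite RmatE mxE. Qed.

Lemma sgeq (R : pzRingType) m n : odd m = odd n -> (-1)^+m = (-1)^+n :> R.
Proof. by move=> h; rewrite -signr_odd h signr_odd. Qed.
Lemma sgb (R : pzRingType) (b : bool) : (if b then 1 else -1 : R) = (-1)^+(~~b).
Proof. by case: b. Qed.

Theorem proposition2p2 (R : realType) (a : 'cV[R]_8) :
  [/\ Lmat (clprime a) = (Lmat a)^T,
      Rmat (clprime a) = (Rmat a)^T,
      Lmat (clbar a) = S8 R *m (Lmat a)^T *m S8 R
    & Rmat (clbar a) = S8 R *m (Rmat a)^T *m S8 R].
Proof.
rewrite !LmatM !RmatM /S8 !mul_diag_mx !mul_mx_diag.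
split; apply/matrixP => i j; rewrite !mxE (kkC j i) sgb /clsign kkE.
all: rewrite !mulrA.
3,4: rewrite [RHS]mulrAC -!exprD.
1,2: rewrite -exprD.
all: congr (_ * _); apply: sgeq;
  rewrite !clswapsE !clxorE /clnegsq;
  case: i => [[|[|[|[|[|[|[|[|//]]]]]]]] ?];
  case: j => [[|[|[|[|[|[|[|[|//]]]]]]]] ?]; by vm_compute.
Qed.
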